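(* Fix integers $s,t\geq 2$ and a subset $W=\{w_1,w_2,\ldots,w_k\}$ of $\{s+1,s+2,\ldots,st\}$ with $w_1<w_2<\cdots<w_k$. Let $I=\{i_1,\ldots,i_k\}$ with $i_1<\cdots<i_k$ be a set of integers satisfying $w_\ell-s+\ell\leq i_\ell\leq w_\ell-1$ for all $\ell\in[k]$. Define the permutation $\mu=\mu_W(I)=\mu_1\mu_2\cdots\mu_{st}$ of $[st]$ by setting $\mu_{i_\ell}=w_\ell$ for each $\ell\in[k]$ and placing the elements of $[st]\setminus W$ in increasing order in the remaining positions. Then $\mu_W(I)$ is a $321$-avoiding linear extension of $K_{s,t}^\alpha$ whose right-to-left minima are precisely the elements of $[st]\setminus W$.
   Context: $K^\alpha_{s,t}$ is the poset on $[st]$ obtained from the comb $K_{s,t}$ (elements $e_{i,j}$, $1\le i\le s$, $1\le j\le t$, covers $e_{i,1}\lessdot e_{i+1,1}$ and $e_{i,j}\lessdot e_{i,j+1}$) by labeling $e_{i,j}$ with $(j-1)s+i$; equivalently its order is generated by $i\lessdot i+1$ for $1\le i\le s-1$ and $i\lessdot i+s$ for $1\le i\le st-s$. A linear extension is a permutation of $[st]$ in which $x$ precedes $y$ whenever $x<y$ in the poset. An entry $\pi_i$ of a permutation is a right-to-left minimum if $\pi_i<\pi_j$ for all $j>i$. *)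

(* Defs.v *)
From mathcomp Require Import all_boot.
Set Implicit Arguments. Unset Strict Implicit. Unset Printing Implicit Defensive.

(* Permutations of [n] = {1,...,n} are represented in one-line notation as
   sequences pi = [:: pi_1; ...; pi_n]; the entry pi_i (1-indexed) is
   nth 0 pi (i-1). *)

Definition is_perm_of (n : nat) (pi : seq nat) : bool := perm_eq pi (iota 1 n).

Definition Kcover (s t x y : nat) : bool :=
  ((1 <= x <= s - 1) && (y == x + 1)) || ((1 <= x <= s * t - s) && (y == x + s)).

Inductive Klt (s t : nat) : nat -> nat -> Prop :=
| Klt_cover x y : Kcover s t x y -> Klt s t x y
| Klt_trans x y z : Klt s t x y -> Klt s t y z -> Klt s t x z.

Definition linear_extension (s t : nat) (pi : seq nat) : Prop :=
  is_perm_of (s * t) pi /\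
  forall x y, Klt s t x y -> index x pi < index y pi.

Definition avoids321 (pi : seq nat) : Prop :=
  forall i j k, i < j -> j < k -> k < size pi ->
    ~ (nth 0 pi j < nth 0 pi i /\ nth 0 pi k < nth 0 pi j).

Definition rl_min (pi : seq nat) (x : nat) : Prop :=
  exists i, i < size pi /\ nth 0 pi i = x /\
    forall j, i < j -> j < size pi -> x < nth 0 pi j.

Fixpoint mu_fill (W I : seq nat) (ps c : seq nat) : seq nat :=
  match ps with
  | [::] => [::]
  | p :: ps' =>
      if p \in I then nth 0 W (index p I) :: mu_fill W I ps' c
      else head 0 c :: mu_fill W I ps' (behead c)
  end.

Definition muW (s t : nat) (W I : seq nat) : seq nat :=
  mu_fill W I (iota 1 (s * t)) [seq x <- iota 1 (s * t) | x \notin W].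

(* Main.v *)
Require Import Defs.
From mathcomp Require Import all_boot zify.

Lemma count_sorted_nth (s : seq nat) r :
  sorted ltn s -> r < size s -> count (fun x => x < nth 0 s r) s = r.
Proof.
elim: s r => [|x s IH] r //= Hs Hr.
have Hall : all (ltn x) s := order_path_min ltn_trans Hs.
have Hp : sorted ltn s by case: s Hs {IH Hall Hr} => //= y s /andP[].
case: r Hr => [|r] Hr /=.
  rewrite ltnn add0n; apply/eqP; rewrite -leqn0 leqNgt -has_count.
  apply/hasPn => y Hy; rewrite -leqNgt; apply: ltnW.
  by move/allP: Hall => /(_ y Hy).
have Hrs : r < size s by [].
have Hnth : x < nth 0 s r by move/allP: Hall; apply; exact: mem_nth.
by rewrite Hnth IH.
Qed.

Arguments count_sorted_nth {s r}.

Lemma count_mem_swap (s t : seq nat) :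
  uniq s -> uniq t -> count (fun x => x \in s) t = count (fun x => x \in t) s.
Proof.
move=> Us Ut; rewrite -!size_filter; apply: perm_size.
apply: uniq_perm; try exact: filter_uniq.
by move=> x; rewrite !mem_filter andbC.
Qed.

Lemma count_iotaS (P : pred nat) v :
  count P (iota 1 v.+1) = count P (iota 1 v) + P v.+1.
Proof. by have := iotaD 1 v 1; rewrite addn1 => ->; rewrite count_cat /= addn0 add1n. Qed.

Lemma count_iota_mono (P : pred nat) a b :
  a <= b -> count P (iota 1 a) <= count P (iota 1 b).
Proof.
move=> Hab; rewrite -(subnKC Hab) iotaD count_cat; exact: leq_addr.
Qed.

Arguments count_iota_mono P {a b}.

Lemma count_iota_le (P : pred nat) a : count P (iota 1 a) <= a.
Proof. by rewrite -{2}(size_iota 1 a) count_size. Qed.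

Lemma count_split (P : pred nat) s :
  count P s + count (fun x => ~~ P x) s = size s.
Proof. exact: count_predC. Qed.

Lemma filter_lt_iota v n :
  1 <= v <= n.+1 -> [seq y <- iota 1 n | y < v] = iota 1 v.-1.
Proof.
move=> /andP[H1 H2].
have -> : n = v.-1 + (n - v.-1) by lia.
rewrite iotaD filter_cat.
rewrite (@eq_in_filter _ _ predT); last by move=> y; rewrite mem_iota /= => Hy; lia.
rewrite filter_predT.
rewrite (@eq_in_filter _ _ pred0); last by move=> y; rewrite mem_iota /= => Hy; apply/negbTE; lia.
by rewrite filter_pred0 cats0.
Qed.

Lemma fill_size W I ps c : size (mu_fill W I ps c) = size ps.
Proof. by elim: ps c => [|p ps IH] c //=; case: ifP => _ /=; rewrite IH. Qed.

Lemma fill_nth W I ps c j : j < size ps ->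
  nth 0 (mu_fill W I ps c) j =
  if nth 0 ps j \in I then nth 0 W (index (nth 0 ps j) I)
  else nth 0 c (count (fun p => p \notin I) (take j ps)).
Proof.
elim: ps c j => [|p ps IH] c j //= Hj.
case: j Hj => [|j] Hj /=.
  by case: ifP => _ //=; rewrite -nth0.
case: ifP => Hp /=; rewrite IH //.
case: ifP => _ //; by rewrite nth_behead.
Qed.

Lemma count_iota_pred (P : pred nat) v :
  0 < v -> count P (iota 1 v) = count P (iota 1 v.-1) + P v.
Proof. by case: v => // v _; rewrite count_iotaS. Qed.

Definition cntIn (L : seq nat) j := count (fun p : nat => p \in L) (iota 1 j).
Definition cntOut (L : seq nat) j := count (fun p : nat => p \notin L) (iota 1 j).

Lemma cnt_split L j : cntIn L j + cntOut L j = j.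
Proof. by rewrite /cntIn /cntOut count_split size_iota. Qed.
Lemma cntIn_S L j : cntIn L j.+1 = cntIn L j + (j.+1 \in L).
Proof. by rewrite /cntIn count_iotaS. Qed.
Lemma cntOut_S L j : cntOut L j.+1 = cntOut L j + (j.+1 \notin L).
Proof. by rewrite /cntOut count_iotaS. Qed.
Lemma cntIn_mono L a b : a <= b -> cntIn L a <= cntIn L b.
Proof. exact: count_iota_mono. Qed.
Lemma cntOut_mono L a b : a <= b -> cntOut L a <= cntOut L b.
Proof. exact: count_iota_mono. Qed.
Lemma cntIn_pred L v : 0 < v -> cntIn L v = cntIn L v.-1 + (v \in L).
Proof. by case: v => // v _; rewrite cntIn_S. Qed.
Lemma cntOut_pred L v : 0 < v -> cntOut L v = cntOut L v.-1 + (v \notin L).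
Proof. by case: v => // v _; rewrite cntOut_S. Qed.

Lemma rank_lemma (s : seq nat) m :
  sorted ltn s -> (forall x, x \in s -> 0 < x) -> m < size s ->
  cntIn s (nth 0 s m).-1 = m.
Proof.
move=> Ss Pos Hm.
have Us : uniq s := sorted_uniq ltn_trans ltnn Ss.
have Hpos : 0 < nth 0 s m by apply: Pos; exact: mem_nth.
rewrite /cntIn count_mem_swap ?iota_uniq //.
rewrite -[RHS](count_sorted_nth Ss Hm).
apply: eq_in_count => x Hx; rewrite mem_iota.
have := Pos x Hx; lia.
Qed.

Arguments rank_lemma {s m}.
Arguments cntIn_mono L {a b}.
Arguments cntOut_mono L {a b}.

Ltac slia := repeat match goal with H : forall _, _ |- _ => clear H | H : context[size _] |- _ => clear H
  | H : is_true (sorted _ _) |- _ => clear H | H : is_true (uniq _) |- _ => clear H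
  | H : is_true (all _ _) |- _ => clear H | H : is_true (perm_eq _ _) |- _ => clear H end; lia.

Theorem lemma2 (s t : nat) (W I : seq nat) :
  2 <= s -> 2 <= t ->
  sorted ltn W -> all (fun w => s < w <= s * t) W ->
  sorted ltn I -> size I = size W ->
  (forall l, l < size W ->
     nth 0 W l - s + l.+1 <= nth 0 I l <= nth 0 W l - 1) ->
  linear_extension s t (muW s t W I) /\
  avoids321 (muW s t W I) /\
  (forall x, rl_min (muW s t W I) x <-> (1 <= x <= s * t) && (x \notin W)).
Proof.
move=> Hs Ht SW AW SI Hsz Hb.
have UW : uniq W := sorted_uniq ltn_trans ltnn SW.
have UI : uniq I := sorted_uniq ltn_trans ltnn SI.
set n := s * t in AW *.
have Wmem : forall w, w \in W -> s < w <= n by move=> w Hw; move/allP: AW => /(_ w Hw).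
have Ibnd : forall l, l < size W -> 1 <= nth 0 I l <= n.
  move=> l Hl; have := Hb l Hl; have := Wmem (nth 0 W l) (mem_nth 0 Hl); slia.
have Imem : forall i, i \in I -> 1 <= i <= n.
  move=> i Hi; rewrite -(nth_index 0 Hi); apply: Ibnd; rewrite -Hsz index_mem //.
set Cs := [seq x <- iota 1 n | x \notin W].
have HcW : cntIn W n = size W.
  rewrite /cntIn count_mem_swap ?iota_uniq //; apply/eqP; rewrite -all_count.
  apply/allP => w Hw; rewrite mem_iota; have := Wmem w Hw; slia.
have HcI : cntIn I n = size I.
  rewrite /cntIn count_mem_swap ?iota_uniq //; apply/eqP; rewrite -all_count.
  apply/allP => w Hw; rewrite mem_iota; have := Imem w Hw; slia.
have HsizeC : size Cs = n - size W.
  rewrite size_filter (_ : count _ _ = cntOut W n) //; have := cnt_split W n; rewrite HcW; lia.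
have SC : sorted ltn Cs by apply: sorted_filter; [exact: ltn_trans | exact: iota_ltn_sorted].
have Crank : forall r, r < size Cs -> cntOut W (nth 0 Cs r).-1 = r.
  move=> r Hr.
  have Hc : nth 0 Cs r \in Cs := mem_nth 0 Hr.
  have := Hc; rewrite mem_filter mem_iota => /andP[_ Hcb].
  rewrite /cntOut -(filter_lt_iota (nth 0 Cs r) n); last by slia.
  rewrite count_filter -[RHS](count_sorted_nth SC Hr) /Cs count_filter.
  by apply: eq_count => x /=; rewrite andbC.
set mu := muW s t W I.
have Hsize : size mu = n by rewrite /mu /muW fill_size size_iota.
have Hnth : forall j, j < n -> nth 0 mu j = if j.+1 \in I then nth 0 W (index j.+1 I)
     else nth 0 Cs (cntOut I j).
  move=> j Hj; rewrite /mu /muW fill_nth ?size_iota // nth_iota // take_iota add1n.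
  by rewrite (_ : minn j n = j) //; slia.
clearbody mu.
have HA : forall j, j < n -> j.+1 \in I -> exists m, [/\ m < size W, nth 0 mu j = nth 0 W m,
     cntIn I j = m, j.+1 = nth 0 I m & cntIn W (nth 0 W m).-1 = m].
  move=> j Hj HjI; exists (index j.+1 I).
  have Hm : index j.+1 I < size W by rewrite -Hsz index_mem.
  have Hnm : nth 0 I (index j.+1 I) = j.+1 by rewrite nth_index.
  split => //.
  - by rewrite Hnth // HjI.
  - have Hm' : index j.+1 I < size I by rewrite Hsz.
    have := rank_lemma SI (fun x Hx => ltac:(have := Imem x Hx; slia)) Hm'.
    by rewrite Hnm.
  - apply: rank_lemma => // x Hx; have := Wmem x Hx; slia.
have HB : forall j, j < n -> j.+1 \notin I -> [/\ nth 0 mu j \notin W, 1 <= nth 0 mu j <= n &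
     cntOut W (nth 0 mu j).-1 = cntOut I j].
  move=> j Hj HjI.
  have Hr : cntOut I j < size Cs.
    have := cntOut_mono I (Hj : j.+1 <= n).
    rewrite cntOut_S HjI HsizeC; have := cnt_split I n; rewrite HcI Hsz; slia.
  have Hc : nth 0 Cs (cntOut I j) \in Cs := mem_nth 0 Hr.
  rewrite Hnth // (negbTE HjI); move: Hc; rewrite mem_filter mem_iota => /andP[HW Hcb].
  split => //; try slia; exact: Crank.
have HWc : forall j, j < n -> (nth 0 mu j \in W) = (j.+1 \in I).
  move=> j Hj; case: (boolP (j.+1 \in I)) => HjI.
    have [m [Hm -> _ _ _]] := HA j Hj HjI; exact: mem_nth.
  by have [/negbTE -> _ _] := HB j Hj HjI.
have ORD_C : forall a b, a < n -> b < n -> b.+1 \notin I -> nth 0 mu a < nth 0 mu b -> a < b.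
  move=> a b Ha Hb' HbI Hlt.
  have [HcW' Hcb Hcr] := HB b Hb' HbI.
  rewrite ltnNge; apply/negP => Hba.
  case: (boolP (a.+1 \in I)) => HaI.
  - have [m [Hm Ev HaIm Eam HWm]] := HA a Ha HaI.
    rewrite Ev in Hlt.
    have Hwpos : 0 < nth 0 W m by have := Wmem (nth 0 W m) (mem_nth 0 Hm); slia.
    have Hab : b < a by rewrite ltn_neqAle Hba andbT; apply/eqP => Eab; rewrite Eab HaI in HbI.
    have H1 := cntOut_mono I (Hab : b.+1 <= a).
    rewrite cntOut_S HbI in H1.
    have Hle : nth 0 W m <= (nth 0 mu b).-1 by slia.
    have H2 := cntOut_mono W Hle.
    rewrite cntOut_pred // (mem_nth 0 Hm) in H2.
    move: H2.
    have := cnt_split I a; have := cnt_split W (nth 0 W m).-1.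
    have := Hb m Hm; slia.
  - have [HaW Hab Har] := HB a Ha HaI.
    have Hle : nth 0 mu a <= (nth 0 mu b).-1 by slia.
    have H2 := cntOut_mono W Hle.
    rewrite cntOut_pred ?HaW in H2; last by slia.
    move: H2.
    have := cntOut_mono I Hba; slia.
have ORD_W : forall a b, a < n -> b < n -> a.+1 \in I -> b.+1 \in I ->
    nth 0 mu a < nth 0 mu b -> a < b.
  move=> a b Ha Hb' HaI HbI Hlt.
  have [m1 [Hm1 E1 C1 _ W1]] := HA a Ha HaI.
  have [m2 [Hm2 E2 C2 _ W2]] := HA b Hb' HbI.
  rewrite E1 E2 in Hlt.
  have Hwpos : 0 < nth 0 W m1 by have := Wmem (nth 0 W m1) (mem_nth 0 Hm1); slia.
  have Hle : nth 0 W m1 <= (nth 0 W m2).-1 by slia.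
  have H2 := cntIn_mono W Hle.
  rewrite cntIn_pred // (mem_nth 0 Hm1) in H2.
  rewrite ltnNge; apply/negP => Hba.
  move: H2.
  have := cntIn_mono I Hba; slia.
have F2 : forall a b, a < n -> b < n -> a.+1 \notin I -> b.+1 \in I ->
    nth 0 mu a + s = nth 0 mu b -> a < b.
  move=> a b Ha Hb' HaI HbI E.
  have [_ Hcb Hcr] := HB a Ha HaI.
  have [m [Hm Ev HbIm Ebm HWm]] := HA b Hb' HbI.
  have Hle : cntOut W (nth 0 mu a).-1 <= (nth 0 mu a).-1 by rewrite /cntOut count_iota_le.
  rewrite ltnNge; apply/negP => Hba.
  have := Hb m Hm; rewrite -Ebm -Ev -E.
  have := cnt_split I b.
  have := cntOut_mono I Hba; slia.
have Hsame : forall a b, a < n -> b < n -> (a.+1 \in I) = (b.+1 \in I) ->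
    nth 0 mu a < nth 0 mu b -> a < b.
  move=> a b Ha Hb' E Hlt; case: (boolP (b.+1 \in I)) => HbI.
    by apply: ORD_W => //; rewrite E.
  exact: ORD_C.
have Hinj : forall a b, a < n -> b < n -> nth 0 mu a = nth 0 mu b -> a = b.
  move=> a b Ha Hb' E.
  have EI : (a.+1 \in I) = (b.+1 \in I) by rewrite -HWc // -HWc // E.
  case: (boolP (a.+1 \in I)) => HaI.
  - have HbI : b.+1 \in I by rewrite -EI.
    have [m1 [Hm1 E1 _ A1 _]] := HA a Ha HaI.
    have [m2 [Hm2 E2 _ A2 _]] := HA b Hb' HbI.
    have Em : m1 = m2.
      by rewrite -(index_uniq 0 Hm1 UW) -(index_uniq 0 Hm2 UW) -E1 -E2 E.
    by apply: succn_inj; rewrite A1 A2 Em.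
  - have HbI : b.+1 \notin I by rewrite -EI.
    have [_ _ R1] := HB a Ha HaI.
    have [_ _ R2] := HB b Hb' HbI.
    rewrite E R2 in R1.
    case: (ltngtP a b) => // Hab.
    + have := cntOut_mono I (Hab : a.+1 <= b); rewrite cntOut_S HaI; slia.
    + have := cntOut_mono I (Hab : b.+1 <= a); rewrite cntOut_S HbI; slia.
have Uniq : uniq mu.
  apply/(uniqP 0) => a b; rewrite !inE Hsize => Ha Hb'; exact: Hinj.
have SubJ : forall j, j < n -> 1 <= nth 0 mu j <= n.
  move=> j Hj; case: (boolP (j.+1 \in I)) => HjI.
  - have [m [Hm -> _ _ _]] := HA j Hj HjI.
    have := Wmem (nth 0 W m) (mem_nth 0 Hm); move: Hs; slia.
  - by have [_ Hb2 _] := HB j Hj HjI.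
have Sub : {subset mu <= iota 1 n}.
  move=> x /(nthP 0) [j]; rewrite Hsize => Hj <-; rewrite mem_iota add1n ltnS.
  exact: SubJ.
have Perm : perm_eq mu (iota 1 n).
  have Hsz2 : size (iota 1 n) <= size mu by rewrite size_iota Hsize.
  have [_ Heq] := uniq_min_size Uniq Sub Hsz2.
  by apply: uniq_perm => //; exact: iota_uniq.
have Hpos : forall x, 1 <= x <= n -> index x mu < n /\ nth 0 mu (index x mu) = x.
  move=> x Hx.
  have Hxm : x \in mu by rewrite (perm_mem Perm) mem_iota; slia.
  by rewrite -Hsize index_mem nth_index.
have En : n = s * t by [].
have Hsn : s <= n by rewrite En leq_pmulr //; slia.
split; last split.
- split; first exact: Perm.
  move=> x y; elim => {x y} [x y Hc | x y z _ IH1 _ IH2]; last exact: ltn_trans IH1 IH2.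
  move: Hc; rewrite /Kcover => Hc.
  have Bxy : [&& 1 <= x <= n, 1 <= y <= n & x < y].
    by case/orP: Hc => /andP[Hx /eqP Ey]; rewrite Ey; move: Hx; slia.
  have /and3P [Bx By Hxy] := Bxy.
  have [Ha Ea] := Hpos x Bx; have [Hb' Eb] := Hpos y By.
  case: (boolP ((index y mu).+1 \in I)) => HbI.
  + have yW : y \in W by rewrite -Eb HWc.
    have := Wmem y yW => Hy.
    case/orP: Hc => /andP[Hx /eqP Ey].
    * move: Hx; slia.
    * case: (boolP ((index x mu).+1 \in I)) => HaI.
      -- by apply: ORD_W => //; rewrite Ea Eb.
      -- by apply: F2 => //; rewrite Ea Eb.
  + by apply: ORD_C => //; rewrite Ea Eb.
- move=> i j k Hij Hjk Hk [H1 H2]; rewrite Hsize in Hk.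
  have Hjn : j < n by slia.
  have Hin : i < n by slia.
  have H3 := ltn_trans H2 H1.
  case Ei: (i.+1 \in I); case Ej: (j.+1 \in I); case Ek: (k.+1 \in I);
  first [ have := Hsame j i Hjn Hin (etrans Ej (esym Ei)) H1; slia
        | have := Hsame k j Hk Hjn (etrans Ek (esym Ej)) H2; slia
        | have := Hsame k i Hk Hin (etrans Ek (esym Ei)) H3; slia ].
- move=> x; split.
  + move=> [i [Hi [Ex Hlater]]]; rewrite Hsize in Hi.
    have := SubJ i Hi; rewrite Ex => Bx; rewrite Bx /=.
    apply/negP => xW.
    have HiI : i.+1 \in I by rewrite -HWc // Ex.
    have [m [Hm Ev _ Eim _]] := HA i Hi HiI.
    have := Hb m Hm; rewrite -Eim -Ev Ex => Hbm.
    have Hsub : {subset iota 1 x.-1 <= take i mu}.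
      move=> y; rewrite mem_iota => Hy.
      have [Hq Eq] := Hpos y ltac:(slia).
      case: (ltngtP (index y mu) i) => Hqi.
      * rewrite -Eq -(nth_take 0 Hqi); apply: mem_nth; rewrite size_takel ?Hsize; slia.
      * have := Hlater _ Hqi; rewrite Hsize Eq => /(_ Hq); slia.
      * by rewrite Hqi Ex in Eq; slia.
    have := uniq_leq_size (iota_uniq 1 x.-1) Hsub; rewrite size_iota size_takel ?Hsize; slia.
  + move=> /andP[Bx xW].
    have [Hp Ep] := Hpos x Bx.
    exists (index x mu); split; first by rewrite Hsize.
    split => // j Hpj; rewrite Hsize => Hj.
    have HpI : (index x mu).+1 \notin I by rewrite -HWc // Ep.
    rewrite ltnNge; apply/negP; rewrite leq_eqVlt => /orP[/eqP E|Hlt].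
    * have := Hinj _ _ Hj Hp (etrans E (esym Ep)); slia.
    * have := ORD_C j (index x mu) Hj Hp HpI ltac:(rewrite Ep; exact Hlt); slia.
Qed.
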